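(* Let $n\ge3$ and let $\mathcal F$ be a non-empty simplicial complex on the vertex set $[n]=\{1,\dots,n\}$ of dimension $n-3$, each of whose facets is of the form $[n]\setminus\{i,i+1\}$ for some $i$. Assume moreover that whenever $[n]\setminus\{i,i+1\}$ is a facet of $\mathcal F$, neither $[n]\setminus\{i+1,i+2\}$ nor $[n]\setminus\{i+2,i+3\}$ is a facet of $\mathcal F$. Then $\mathcal F$ has trivial (reduced) homology groups. *)

(* Defs.v *)
From mathcomp Require Import all_boot all_order all_algebra.
Set Implicit Arguments. Unset Strict Implicit. Unset Printing Implicit Defensive.
Import GRing.Theory Num.Theory.
Local Open Scope ring_scope.

(* Vertices [n] = {1..n} are represented by 'I_n = {0..n-1}; indices cyclic mod n. *)

Definition simplicial_complex (n : nat) (F : {set {set 'I_n}}) : Prop :=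
  forall s t : {set 'I_n}, s \in F -> t \subset s -> t \in F.

Definition is_facet (n : nat) (F : {set {set 'I_n}}) (s : {set 'I_n}) : Prop :=
  s \in F /\ (forall t, t \in F -> s \subset t -> t = s).

Definition cface (n : nat) (i : nat) : {set 'I_n} :=
  [set j : 'I_n | (nat_of_ord j != i %% n)%N && (nat_of_ord j != i.+1 %% n)%N].

Definition chain (n : nat) := {ffun {set 'I_n} -> int}.

(* chains of the complex F of size k (dimension k-1), k = 0 is the augmentation *)
Definition is_kchain (n : nat) (F : {set {set 'I_n}}) (k : nat) (c : chain n) : Prop :=
  forall s, c s != 0 -> s \in F /\ #|s| = k.

(* simplicial boundary: for tau = [v_0 < ... < v_k],
   d tau = sum_i (-1)^i (tau \ {v_i}); the index of v in tau is #|{u in tau | u < v}| *)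
Definition bd (n : nat) (c : chain n) : chain n :=
  [ffun s : {set 'I_n} => \sum_(v : 'I_n | v \notin s)
      (-1) ^+ #|[set u in s | (u < v)%N]| * c (v |: s)].

Definition reduced_homology_trivial (n : nat) (F : {set {set 'I_n}}) : Prop :=
  forall (k : nat) (c : chain n), is_kchain F k c -> bd c = 0 ->
    exists d : chain n, is_kchain F k.+1 d /\ bd d = c.

(* Main.v *)
Require Import Defs.
From mathcomp Require Import all_boot all_order all_algebra ring.
Set Implicit Arguments. Unset Strict Implicit. Unset Printing Implicit Defensive.
Import GRing.Theory Num.Theory.
Open Scope ring_scope.

Definition sg n (s : {set 'I_n}) (w : 'I_n) : int := (-1) ^+ #|[set u in s | (u < w)%N]|.

Lemma sgK n s (w : 'I_n) : sg s w * sg s w = 1.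
Proof. by rewrite /sg -exprD -signr_odd oddD addbb. Qed.

Lemma sgU n (s : {set 'I_n}) v w : v \notin s ->
  sg (v |: s) w = sg s w * (-1) ^+ (v < w)%N.
Proof.
move=> vs; rewrite /sg -exprD; congr (_ ^+ _).
case: ltnP => vw.
- have -> : [set u in v |: s | (u < w)%N] = v |: [set u in s | (u < w)%N].
    by apply/setP => x; rewrite !inE; case: eqP => [->|]; rewrite ?vw ?orbF.
  by rewrite cardsU1 inE (negPf vs) /= addnC.
- have -> : [set u in v |: s | (u < w)%N] = [set u in s | (u < w)%N].
    apply/setP => x; rewrite !inE; case: eqP => [->|] //=.
    by rewrite ltnNge vw !andbF.
  by rewrite addn0.
Qed.

Definition H n (v : 'I_n) (c : chain n) : chain n :=
  [ffun t : {set 'I_n} => if v \in t then sg (t :\ v) v * c (t :\ v) else 0].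

Lemma bdE n (c : chain n) s : bd c s = \sum_(v | v \notin s) sg s v * c (v |: s).
Proof. by rewrite ffunE. Qed.

Lemma bdH_out n (v : 'I_n) c (s : {set 'I_n}) : v \notin s -> bd (H v c) s = c s.
Proof.
move=> vs; rewrite bdE (bigD1 v) //= big1 ?addr0.
  by rewrite ffunE setU11 setU1K // mulrA sgK mul1r.
move=> w /andP [ws wv]; rewrite ffunE !inE eq_sym (negPf wv) (negPf vs) /=.
by rewrite mulr0.
Qed.

Lemma bdH_in n (v : 'I_n) c (s : {set 'I_n}) : v \notin s ->
  bd (H v c) (v |: s) + sg s v * bd c s = c (v |: s).
Proof.
move=> vs; rewrite !bdE [X in _ + _ * X](bigD1 v) //=. rewrite mulrDr mulrA sgK mul1r addrCA -[RHS]addr0; congr (_ + _).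
have E : forall w : 'I_n, (w \notin v |: s) = (w \notin s) && (w != v).
  by move=> w; rewrite !inE negb_or andbC.
rewrite mulr_sumr (eq_bigl (fun w => (w \notin s) && (w != v))) // -big_split /=.
apply: big1 => w /andP [ws wv].
have e1 : (w |: (v |: s)) :\ v = w |: s.
  apply/setP => x; rewrite !inE; case: (eqVneq x v) => [->|xv] /=.
    by rewrite eq_sym (negPf wv) (negPf vs).
  by [].
rewrite ffunE !inE eqxx orbT /= e1.
rewrite sgU // (sgU _ ws).
case: (ltngtP v w) => h.
- by rewrite /= ?expr1 ?expr0; ring.
- by rewrite /= ?expr1 ?expr0; ring.
- by move/val_inj: h => h; rewrite h eqxx in wv.
Qed.

Close Scope ring_scope.

Lemma cface_mod n i j : i %% n = j %% n -> cface n i = cface n j.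
Proof.
move=> e; apply/setP => x; rewrite !inE e.
have -> : i.+1 %% n = j.+1 %% n by rewrite -[i.+1]addn1 -[j.+1]addn1 -modnDml e modnDml.
by [].
Qed.


Theorem lemma3p7 (n : nat) (F : {set {set 'I_n}}) :
  (3 <= n)%N ->
  simplicial_complex F ->
  F != set0 ->
  (forall s, is_facet F s -> exists i : nat, s = cface n i) ->
  (forall i : nat, is_facet F (cface n i) ->
     ~ is_facet F (cface n i.+1) /\ ~ is_facet F (cface n i.+2)) ->
  reduced_homology_trivial F.
Proof.
move=> n3 scF F0 hfac hsep.
have facetE : forall s, s \in F -> {f | is_facet F f & s \subset f}.
  move=> s sF; have [f /maxsetP [fF fmax] sf] := maxset_exists (P := mem F) sF.
  by exists f => //; split => // t tF ft; apply: fmax.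
have [s0 s0F] := set0Pn _ F0.
have [f0 f0fac _] := facetE _ s0F.
have [i0 f0E] := hfac _ f0fac.
have n0 : (0 < n)%N by apply: leq_trans n3.
pose v : 'I_n := Ordinal (ltn_pmod i0.+2 n0).
have vin : forall f, is_facet F f -> v \in f.
  move=> f ffac; have [j fE] := hfac _ ffac; subst f.
  have [h1 h2] : ~ is_facet F (cface n i0.+1) /\ ~ is_facet F (cface n i0.+2).
    by apply: hsep; rewrite -f0E.
  rewrite inE /=; apply/andP; split; apply/negP => /eqP e.
  - by apply: h2; rewrite (cface_mod (j := j)).
  - apply: h1; rewrite (cface_mod (j := j)) //.
    by apply/eqP; rewrite -(eqn_modDr 1) !addn1; apply/eqP.
have cone : forall s, s \in F -> v |: s \in F.
  move=> s sF; have [f ffac sf] := facetE _ sF.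
  apply: (scF f); first by case: ffac.
  by rewrite subUset sub1set vin.
move=> k c kc bc0.
exists (H v c); split.
  move=> t; rewrite ffunE; case: ifP => vt; last by rewrite eqxx.
  move=> nz; have cnz : c (t :\ v) != 0%R.
    by apply: contraNneq nz => ->; rewrite GRing.mulr0.
  have [tF tk] := kc _ cnz.
  by rewrite -(setD1K vt) cone //; split => //; rewrite cardsU1 !inE eqxx /= tk.
apply/ffunP => s; case: (boolP (v \in s)) => vs.
  have vs' : v \notin s :\ v by rewrite setD11.
  have h := bdH_in c vs'.
  rewrite setD1K // in h.
  have z : (0%R : chain n) (s :\ v) = 0%R by rewrite ffunE.
  by rewrite -h bc0 z GRing.mulr0 GRing.addr0.
by rewrite bdH_out.
Qed.
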